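(* Let $G$ be a compact Abelian group with a continuous length function $l$, and let $(H_n)_{n\in\mathbb{N}}$ be closed subgroups of $G$ converging to $G$ for the Hausdorff distance of $d_l(g,g')=l(g^{-1}g')$. For each $n$ let $J_n\subseteq\widehat G$ be the annihilator of $H_n$ and $q_n:\widehat G\to\widehat{H_n}=\widehat G/J_n$ the canonical surjection. Let $F$ be a finite subset of $\widehat G$. Then there exists $N\in\mathbb{N}$ such that for all $n\ge N$, $q_n$ is injective on $F$.
   Context: A length function: $l\ge0$, $l(g)=0$ iff $g$ is the unit, symmetric, subadditive. *)

(* Defs.v *)
From HB Require Import structures.
From mathcomp Require Import all_boot all_order all_algebra.
From mathcomp Require Import all_classical all_reals all_analysis.
From mathcomp Require Import complex.
Set Implicit Arguments. Unset Strict Implicit. Unset Printing Implicit Defensive.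
Import Order.TTheory GRing.Theory Num.Theory numFieldNormedType.Exports.
Local Open Scope classical_set_scope.
Local Open Scope ring_scope.

(* Compact abelian groups are written additively: G : topologicalZmodType,
   unit 0, g^{-1} g' is written g' - g. *)

Definition is_length (R : realType) (G : zmodType) (l : G -> R) : Prop :=
  [/\ (forall g, 0 <= l g),
      (forall g, l g = 0 <-> g = 0),
      (forall g, l (- g) = l g) &
      (forall g h, l (g + h) <= l g + l h)].

Definition dist_of_length (R : realType) (G : zmodType) (l : G -> R) (g g' : G) : R :=
  l (g' - g).

Definition hausdorff_dist (R : realType) (T : Type) (d : T -> T -> R)
    (A B : set T) : \bar R :=
  Order.max
    (ereal_sup [set ereal_inf [set (d a b)%:E | b in B] | a in A])
    (ereal_sup [set ereal_inf [set (d a b)%:E | a in A] | b in B]).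

Definition closed_subgroup (G : topologicalZmodType) (H : set G) : Prop :=
  [/\ closed H, H 0 & (forall x y, H x -> H y -> H (x - y))].

(* Continuity into C is expressed through
   continuity of the real and imaginary parts (product topology on C = R^2). *)
Definition is_character (R : realType) (G : topologicalZmodType)
    (chi : G -> R[i]) : Prop :=
  [/\ (forall g, `|chi g| = 1),
      (forall g h, chi (g + h) = chi g * chi h),
      continuous ((fun g => complex.Re (chi g)) : G -> R) &
      continuous ((fun g => complex.Im (chi g)) : G -> R)].

Definition dual_group (R : realType) (G : topologicalZmodType) : set (G -> R[i]) :=
  [set chi | is_character chi].

Definition annihilator (R : realType) (G : topologicalZmodType) (H : set G)
    : set (G -> R[i]) :=
  [set chi | is_character chi /\ (forall h, H h -> chi h = 1)].

Definition char_div (R : realType) (G : Type) (chi psi : G -> R[i]) : G -> R[i] :=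
  fun g => chi g * (psi g)^-1.

(* q : \hat G -> \hat G / J is the canonical surjection; q chi = q psi iff
   chi psi^{-1} \in J.  "q is injective on F". *)
Definition quotient_injective_on (R : realType) (G : Type)
    (J : set (G -> R[i])) (F : set (G -> R[i])) : Prop :=
  forall chi psi, F chi -> F psi -> J (char_div chi psi) -> chi = psi.

(* Main.v *)
Require Import Defs.
From HB Require Import structures.
From mathcomp Require Import all_boot all_order all_algebra.
From mathcomp Require Import all_classical all_reals all_analysis.
From mathcomp Require Import complex.
From mathcomp Require Import finmap.
Import Order.TTheory GRing.Theory Num.Theory numFieldNormedType.Exports.
Local Open Scope classical_set_scope.
Local Open Scope ring_scope.

Section S.
Variables (R : realType) (G : topologicalZmodType).

Definition fd (chi psi : G -> R[i]) (x : G) : R :=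
  (complex.Re (chi x) - complex.Re (psi x))^+2 + (complex.Im (chi x) - complex.Im (psi x))^+2.

Lemma fdE chi psi x : (fd chi psi x)%:C%C = `|chi x - psi x|^+2.
Proof.
rewrite -add_Re2_Im2 /fd.
have -> : complex.Re (chi x - psi x) = complex.Re (chi x) - complex.Re (psi x).
  by case: (chi x) => ? ?; case: (psi x).
have -> : complex.Im (chi x - psi x) = complex.Im (chi x) - complex.Im (psi x).
  by case: (chi x) => ? ?; case: (psi x).
by [].
Qed.

Lemma fd_cont chi psi : is_character chi -> is_character psi -> continuous (fd chi psi).
Proof.
case=> _ _ c1 c2 [_ _ c3 c4] x; rewrite /fd.
apply: cvgD; apply: cvgM; apply: cvgB; by [apply: c1|apply: c2|apply: c3|apply: c4].
Qed.

Lemma char0 (chi : G -> R[i]) : is_character chi -> chi 0 = 1.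
Proof.
case=> n m _ _; have := m 0 0; rewrite addr0 => h.
have : chi 0 != 0 by apply/eqP => h0; have := n 0; rewrite h0 normr0 => /eqP; rewrite eq_sym oner_eq0.
move=> nz; apply: (mulfI nz); by rewrite mulr1 -h.
Qed.

Lemma small_delta (l : G -> R) chi psi g : compact [set: G] -> is_length l -> continuous l ->
  is_character chi -> is_character psi -> 0 < fd chi psi g ->
  exists2 d : R, 0 < d & forall x, l x < d -> fd chi psi x < fd chi psi g.
Proof.
move=> cpt [l0 l0E lN lD] lc chic psic cgt.
set c := fd chi psi g.
set K := [set x | c <= fd chi psi x].
have Kc : closed K.
  have -> : K = fd chi psi @^-1` [set y | c <= y] by [].
  apply: preimage_closed; last exact: closed_ge.
  by move=> x _; apply: fd_cont.
have Kcp : compact K by apply: (subclosed_compact Kc cpt).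
have lK : compact (l @` K).
  by apply: continuous_compact => //; apply: continuous_subspaceT.
have lKc : closed (l @` K) by apply: compact_closed => //; apply: Rhausdorff.
have op : open (~` (l @` K)) by apply: closed_openC.
have z : (~` (l @` K)) 0.
  move=> [x Kx lx0]; move: Kx; rewrite /K /= (l0E x).1 // /fd char0 // char0 //.
  by rewrite !subrr expr0n /= addr0 leNgt cgt.
have /nbhs_ballP [e e0 He] : nbhs (0 : R) (~` (l @` K)) by apply: open_nbhs_nbhs.
exists e => // x lxe.
rewrite ltNge; apply/negP => Kx.
apply: (He (l x)); last by exists x.
by rewrite /ball /= sub0r normrN ger0_norm.
Qed.

Lemma pair_ev (l : G -> R) (H : nat -> set G) (chi psi : G -> R[i]) : compact [set: G] -> is_length l -> continuous l ->
  (fun n => hausdorff_dist (dist_of_length l) (H n) [set: G]) @ \oo --> 0%E ->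
  is_character chi -> is_character psi -> chi <> psi ->
  \forall n \near \oo, ~ @annihilator R G (H n) (char_div chi psi).
Proof.
move=> cpt ll lc hc chic psic neq.
have /existsNP [g hg] : ~ forall g, chi g = psi g by move=> h; apply: neq; apply: funext.
have fpos : 0 < fd chi psi g.
  rewrite lt_def addr_ge0 ?sqr_ge0 // andbT; apply/eqP => f0.
  have := fdE chi psi g; rewrite f0 /= => /esym /eqP.
  rewrite expf_eq0 /= normr_eq0 subr_eq0 => /eqP; exact: hg.
have [d d0 Hd] := small_delta l chi psi g cpt ll lc chic psic fpos.
move/fine_cvgP : hc => [fin fc].
have ev : \forall n \near \oo, fine (hausdorff_dist (dist_of_length l) (H n) [set: G]) < d . have := (cvgr_lt _ fc d d0). exact.
near=> n => -[_ hann].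
have hn : fine (hausdorff_dist (dist_of_length l) (H n) [set: G]) < d by near: n.
have hf : hausdorff_dist (dist_of_length l) (H n) [set: G] \is a fin_num by near: n.
have hlt : (hausdorff_dist (dist_of_length l) (H n) [set: G] < d%:E)%E by rewrite -(fineK hf) lte_fin.
have : (ereal_inf [set (dist_of_length l a g)%:E | a in H n] < d%:E)%E.
  apply: le_lt_trans hlt; rewrite /hausdorff_dist le_max; apply/orP; right.
  by apply: ereal_sup_ubound; exists g.
case/ereal_inf_lt => _ [a Ha <-]; rewrite lte_fin /dist_of_length => la.
have := Hd _ la.
have ea : chi a = psi a.
  have := hann a Ha; rewrite /char_div => h.
  have psi0 : psi a != 0.
    by apply/eqP => h0; case: psic => nn _ _ _; have := nn a; rewrite h0 normr0 => /eqP; rewrite eq_sym oner_eq0.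
  by rewrite -(mulfVK psi0 (chi a)) h mul1r.
have eg : fd chi psi g = fd chi psi (g - a).
  have : (fd chi psi g)%:C%C = (fd chi psi (g - a))%:C%C.
    rewrite !fdE.
    case: chic => nc mc _ _; case: psic => _ mp _ _.
    have -> : g = (g - a) + a by rewrite subrK.
    rewrite addrK mc mp -ea -mulrBl normrM nc mulr1.
    by [].
  by move/(congr1 (@complex.Re R)).
by rewrite -eg ltxx.
Unshelve. all: end_near.
Qed.
End S.

Theorem mainTheorem10 (R : realType) (G : topologicalZmodType) (l : G -> R)
  (H : nat -> set G) (F : set (G -> R[i])) :
  compact [set: G] ->
  is_length l -> continuous l ->
  (forall n, closed_subgroup (H n)) ->
  (fun n => hausdorff_dist (dist_of_length l) (H n) [set: G]) @ \oo --> 0%E ->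
  F `<=` @dual_group R G -> finite_set F ->
  exists N : nat, forall n : nat, (N <= n)%N ->
    quotient_injective_on (@annihilator R G (H n)) F.
Proof.
move=> cpt ll lc _ hc FG /finite_fsetP [D FD].
pose f (p : (G -> R[i]) * (G -> R[i])) :=
  [set n | p.1 = p.2 \/ ~ @annihilator R G (H n) (char_div p.1 p.2)].
have : \forall n \near \oo, (\bigcap_(p in [set` (D `*` D)%fset]) f p) n.
  apply: filter_bigI => -[chi psi] /=.
  rewrite in_fsetM => /andP [Dc Dp].
  have [e|ne] := pselect (chi = psi).
    by exists 0%N => // n _; left.
  have h := @pair_ev R G l H chi psi cpt ll lc hc (FG chi _) (FG psi _) ne.
  rewrite FD in h; have {h} := h Dc Dp => h.
  by apply: filterS h => n h; right.
case=> N _ HN; exists N => n Nn chi psi Fc Fp hann.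
have := HN n Nn (chi, psi).
case.
- by rewrite /= in_fsetM /=; rewrite FD in Fc Fp; apply/andP.
- by [].
- by [].
Qed.
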